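(* Consider the following cutting-plane algorithm for $\min_{\mathbf{x}\in\mathcal{X}}\Phi_R(\mathbf{x})$ with tolerance $\epsilon\ge0$. Initialize $L=1$, $\theta^{lb}=-\infty$, $\theta^{ub}=+\infty$, and pick $\hat{\mathbf{x}}^1\in\mathcal{X}$; the cut set is initially empty. While $\theta^{ub}-\theta^{lb}>\epsilon$: set $\hat{\mathbf x}=\hat{\mathbf x}^L$; for each $\omega\in\Omega$ compute an optimal solution $\hat{\mathbf S}^\omega$ of the problem defining $Q_\omega(\hat{\mathbf x})$; compute $(\hat p_\omega)\in\arg\min_{P\in\mathfrak P}\sum_\omega p_\omega f^\omega(\hat{\mathbf S}^\omega)$ and $\Phi_R(\hat{\mathbf x})=\sum_\omega\hat p_\omega f^\omega(\hat{\mathbf S}^\omega)$; if $\Phi_R(\hat{\mathbf x})<\theta^{ub}$ set $\theta^{ub}=\Phi_R(\hat{\mathbf x})$ and $\mathbf x^*=\hat{\mathbf x}$; add the cut $\eta\ge\Phi_R(\hat{\mathbf x})-\sum_{q=1}^k\sum_{i\in N}c_{q,i}(\hat{\mathbf x})x_{q,i}$ with $c_{q,i}(\hat{\mathbf x})=\max_{P\in\mathfrak P}\sum_\omega p_\omega\rho^\omega_{q,i}(\boldsymbol\emptyset)\hat y^\omega_{q,i}\xi^\omega_i$; solve the master problem $\min\{\eta:\mathbf x\in\mathcal X,\ \eta\in\mathbb R,\ (\eta,\mathbf x)\text{ satisfies all cuts added so far}\}$ exactly, obtaining $(\eta^{L+1},\hat{\mathbf x}^{L+1})$; set $\theta^{lb}=\eta^{L+1}$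 and $L\leftarrow L+1$. Assuming every subproblem (each $Q_\omega$, each optimization over $\mathfrak P$, and each master problem) is solved exactly, the algorithm terminates after finitely many iterations, and upon termination $\theta^{ub}=\Phi_R(\mathbf x^* )\le\min_{\mathbf x\in\mathcal X}\Phi_R(\mathbf x)+\epsilon$; in particular, with $\epsilon=0$ it returns a globally optimal solution $\mathbf x^*$ of $\min_{\mathbf x\in\mathcal X}\Phi_R(\mathbf x)$.
   Context: Let $n,k$ be positive integers, $N=\{1,\dots,n\}$, and $\mathbb{X}(N,k)$ the set of $k$-tuples $\mathbf{S}=(S_1,\dots,S_k)$ of pairwise disjoint subsets of $N$, identified with $\mathbf{s}\in\{0,1\}^{kn}$ via $s_{q,i}=1$ iff $i\in S_q$. A function $f:\mathbb{X}(N,k)\to\mathbb{R}$ is $k$-submodular if $f(\mathbf{X})+f(\mathbf{Y})\ge f(\mathbf{X}\sqcap\mathbf{Y})+f(\mathbf{X}\sqcup\mathbf{Y})$, where $\mathbf{X}\sqcap\mathbf{Y}=(X_q\cap Y_q)_q$ and the $i$-th component of $\mathbf{X}\sqcup\mathbf{Y}$ is $(X_i\cup Y_i)\setminus\bigcup_{q\ne i}(X_q\cup Y_q)$; monotone if $f(\mathbf X)\le f(\mathbf Y)$ whenever $X_q\subseteq Y_q$ for all $q$. $\Omega$ is a finite scenario set; for each $\omega$ we have $\xi^\omega\in\{0,1\}^n$ and a monotone $k$-submodular $f^\omega$ with marginal gains $\rho^\omega_{q,i}(\mathbf{X})=f^\omega(X_1,\dots,X_q\cup\{i\},\dots,X_k)-f^\omega(\mathbf{X})$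 for $i\notin\bigcup_rX_r$; $\boldsymbol\emptyset=(\emptyset,\dots,\emptyset)$. With nonnegative integer budgets $A_q,D_q$: $\mathcal{X}=\{\mathbf{x}\in\{0,1\}^{kn}:\sum_i x_{q,i}\le A_q\ \forall q,\ \sum_q x_{q,i}\le1\ \forall i\}$; $Q_\omega(\mathbf x)=\max\{f^\omega(\mathbf S):\mathbf S\in\mathbb X(N,k),\ s_{q,i}\le1-x_{q,i}\xi^\omega_i\ \forall q,i,\ \sum_i s_{q,i}\le D_q\ \forall q\}$. $\mathfrak P$ is a nonempty compact set of probability distributions $(p_\omega)_{\omega\in\Omega}$, and $\Phi_R(\mathbf x)=\min_{P\in\mathfrak P}\sum_\omega p_\omega Q_\omega(\mathbf x)$. $\hat y^\omega_{q,i}=1$ if $i\in\hat S^\omega_q$ and $0$ otherwise. *)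

(* Defs.v *)
From HB Require Import structures.
From mathcomp Require Import all_boot all_order all_algebra.
From mathcomp Require Import all_classical all_reals all_analysis.

Set Implicit Arguments.
Unset Strict Implicit.
Unset Printing Implicit Defensive.

Import Order.TTheory GRing.Theory Num.Theory numFieldNormedType.Exports.

Local Open Scope ring_scope.

(* A k-tuple of subsets of N = {1..n} (encoded as 'I_n).  Also used for the
   binary decision x in {0,1}^{kn}: x_{q,i} = 1 iff i \in x q. *)
Definition ktuple (n k : nat) := {ffun 'I_k -> {set 'I_n}}.

Definition in_Xk n k (S : ktuple n k) : Prop :=
  forall q r : 'I_k, q != r -> (S q :&: S r == finset.set0).

Definition kmeet n k (X Y : ktuple n k) : ktuple n k :=
  [ffun q => X q :&: Y q].

Definition kjoin n k (X Y : ktuple n k) : ktuple n k :=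
  [ffun q => (X q :|: Y q) :\: \bigcup_(r | r != q) (X r :|: Y r)].

Definition k_submodular (R : realType) n k (f : ktuple n k -> R) : Prop :=
  forall X Y, in_Xk X -> in_Xk Y ->
    f (kmeet X Y) + f (kjoin X Y) <= f X + f Y.

Definition k_monotone (R : realType) n k (f : ktuple n k -> R) : Prop :=
  forall X Y, in_Xk X -> in_Xk Y -> (forall q, X q \subset Y q) -> f X <= f Y.

Definition kempty n k : ktuple n k := [ffun _ => finset.set0].

Definition kadd n k (S : ktuple n k) (q : 'I_k) (i : 'I_n) : ktuple n k :=
  [ffun r => if r == q then i |: S r else S r].

Definition marginal (R : realType) n k (f : ktuple n k -> R)
  (S : ktuple n k) (q : 'I_k) (i : 'I_n) : R := f (kadd S q i) - f S.

Definition in_calX n k (A : 'I_k -> nat) (x : ktuple n k) : Prop :=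
  (forall q : 'I_k, \sum_(i < n) (i \in x q) <= A q)%N /\
  (forall i : 'I_n, \sum_(q < k) (i \in x q) <= 1)%N.

Definition Qfeas n k (D : 'I_k -> nat) (xi : 'I_n -> bool)
  (x S : ktuple n k) : Prop :=
  [/\ in_Xk S,
      (forall (q : 'I_k) (i : 'I_n), (i \in S q) <= 1 - (i \in x q) * xi i)%N
    & (forall q : 'I_k, \sum_(i < n) (i \in S q) <= D q)%N].

(* Q_omega(x): maximum of f over a finite nonempty set (written as sup) *)
Definition Qval (R : realType) n k (f : ktuple n k -> R) (D : 'I_k -> nat)
  (xi : 'I_n -> bool) (x : ktuple n k) : R :=
  sup (f @` [set S | Qfeas D xi x S])%classic.

Definition is_distr (R : realType) (Om : finType) (p : Om -> R) : Prop :=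
  (forall w, 0 <= p w) /\ \sum_(w : Om) p w = 1.

Definition PhiR (R : realType) n k (Om : finType) (f : Om -> ktuple n k -> R)
  (xi : Om -> 'I_n -> bool) (D : 'I_k -> nat) (Pf : set (Om -> R))
  (x : ktuple n k) : R :=
  inf [set \sum_(w : Om) p w * Qval (f w) D (xi w) x | p in Pf]%classic.

Definition cutcoef (R : realType) n k (Om : finType) (f : Om -> ktuple n k -> R)
  (xi : Om -> 'I_n -> bool) (Pf : set (Om -> R)) (Shat : Om -> ktuple n k)
  (q : 'I_k) (i : 'I_n) : R :=
  sup [set \sum_(w : Om) p w * (marginal (f w) (kempty n k) q i
           * (i \in Shat w q)%:R * (xi w i)%:R) | p in Pf]%classic.

(* a cut is a pair (Phi_R(xhat), c(xhat)); it reads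
   eta >= Phi_R(xhat) - sum_q sum_i c_{q,i}(xhat) x_{q,i} *)
Definition cut_ok (R : realType) n k (eta : R) (x : ktuple n k)
  (cut : R * ('I_k -> 'I_n -> R)) : Prop :=
  cut.1 - \sum_(q < k) \sum_(i < n) cut.2 q i * (i \in x q)%:R <= eta.

Definition master_opt (R : realType) n k (A : 'I_k -> nat)
  (cuts : seq (R * ('I_k -> 'I_n -> R))) (eta : R) (x : ktuple n k) : Prop :=
  [/\ in_calX A x,
      (forall c, c \in cuts -> cut_ok eta x c)
    & (forall (eta' : R) (x' : ktuple n k), in_calX A x' ->
         (forall c, c \in cuts -> cut_ok eta' x' c) -> eta <= eta')].

Record alg_state (R : realType) (n k : nat) := AlgState {
  theta_lb : \bar R;
  theta_ub : \bar R;
  x_star : ktuple n k;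
  x_hat : ktuple n k;
  cuts : seq (R * ('I_k -> 'I_n -> R))
}.

Definition alg_init (R : realType) n k (x1 : ktuple n k) : alg_state R n k :=
  AlgState -oo%E +oo%E x1 x1 [::].

Definition alg_continue (R : realType) n k (eps : R) (s : alg_state R n k) : Prop :=
  (eps%:E < theta_ub s - theta_lb s)%E.

Definition alg_step (R : realType) n k (Om : finType) (f : Om -> ktuple n k -> R)
  (xi : Om -> 'I_n -> bool) (A D : 'I_k -> nat) (Pf : set (Om -> R))
  (s s' : alg_state R n k) : Prop :=
  exists (Shat : Om -> ktuple n k) (phat : Om -> R),
    [/\ (forall w, Qfeas D (xi w) (x_hat s) (Shat w) /\
           (forall S, Qfeas D (xi w) (x_hat s) S -> f w S <= f w (Shat w))),
        Pf phat,
        (forall p, Pf p -> \sum_(w : Om) phat w * f w (Shat w)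
                            <= \sum_(w : Om) p w * f w (Shat w))
      & let v := \sum_(w : Om) phat w * f w (Shat w) in
        let newcuts := rcons (cuts s) (v, cutcoef f xi Pf Shat) in
        let improve := (v%:E < theta_ub s)%E in
        exists (eta : R) (xnew : ktuple n k),
          master_opt A newcuts eta xnew /\
          s' = AlgState eta%:E
                 (if improve then v%:E else theta_ub s)
                 (if improve then x_hat s else x_star s)
                 xnew newcuts].

(* Main.v *)
From Pilot Require Import Defs.
From HB Require Import structures.
From mathcomp Require Import all_boot all_order all_algebra.
From mathcomp Require Import all_classical all_reals all_analysis.
From mathcomp Require Import lra.
Import Pilot.Defs.
Import Order.TTheory GRing.Theory Num.Theory numFieldNormedType.Exports.
Local Open Scope classical_set_scope.
Local Open Scope ring_scope.

Section Gen.
Variable R : realType.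

Lemma sup_max (E : set R) x0 : E x0 -> (forall y, E y -> y <= x0) -> sup E = x0.
Proof.
move=> Ex ub; apply/le_anti/andP; split.
  by apply: ge_sup; [exists x0 | move=> y /ub].
by apply: ub_le_sup => //; exists x0 => y /ub.
Qed.

Lemma inf_min (E : set R) x0 : E x0 -> (forall y, E y -> x0 <= y) -> inf E = x0.
Proof.
move=> Ex lb; apply/le_anti/andP; split.
  by apply: ge_inf => //; exists x0 => y /lb.
by apply: lb_le_inf; [exists x0 | move=> y /lb].
Qed.

Lemma le_sup_ub (E : set R) x b : E x -> (forall y, E y -> y <= b) -> x <= sup E.
Proof. by move=> Ex ub; apply: ub_le_sup => //; exists b => y /ub. Qed.

Lemma inf_le_lb (E : set R) x b : E x -> (forall y, E y -> b <= y) -> inf E <= x.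
Proof. by move=> Ex lb; apply: ge_inf => //; exists b => y /lb. Qed.

Lemma distr_le1 (Om : finType) (p : Om -> R) w : is_distr p -> p w <= 1.
Proof.
case=> p0 <-; rewrite (bigD1 w) //= lerDl; apply: sumr_ge0 => *; exact: p0.
Qed.

Lemma distr_bound (Om : finType) (p : Om -> R) (a : Om -> R) : is_distr p ->
  `| \sum_w p w * a w | <= \sum_w `|a w|.
Proof.
move=> hp; apply: le_trans (ler_norm_sum _ _ _) _; apply: ler_sum => w _.
rewrite normrM ger0_norm; last by case: hp.
by rewrite ler_piMl // distr_le1.
Qed.

Lemma sum_norm_ge (T : finType) (g : T -> R) x : `|g x| <= \sum_y `|g y|.
Proof. by rewrite (bigD1 x) //= lerDl sumr_ge0. Qed.
End Gen.
Section K.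
Variables (n k : nat).

Lemma inXk_uniq (S : ktuple n k) (q r : 'I_k) (j : 'I_n) : in_Xk S -> j \in S q -> j \in S r -> q = r.
Proof.
move=> hS jq jr; apply/eqP; apply: contraT => qr.
by move: (hS _ _ qr) => /eqP/setP/(_ j); rewrite inE jq jr inE.
Qed.

Lemma inXk_empty : in_Xk (kempty n k).
Proof. by move=> q r _; rewrite !ffunE finset.setI0. Qed.

Lemma inXk_kadd (S : ktuple n k) (q : 'I_k) (i : 'I_n) : in_Xk S -> (forall r : 'I_k, i \notin S r) ->
  in_Xk (kadd S q i).
Proof.
move=> hS hi r s rs; apply/eqP/setP => j; rewrite !ffunE !inE.
have H : forall t, j \in (if t == q then i |: S t else S t) -> (j == i) || (j \in S t).
  by move=> t; case: (t == q); rewrite ?inE // => ->; rewrite orbT.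
apply/negP => /andP[hr hs].
have [ji|nji] := eqVneq j i.
  subst j; move: hr hs; case: eqP => rq; case: eqP => sq.
  - by subst; rewrite eqxx in rs.
  - by move=> _; rewrite (negbTE (hi s)).
  - by rewrite (negbTE (hi r)).
  - by rewrite (negbTE (hi r)).
move: (H _ hr) (H _ hs); rewrite (negbTE nji) /= => jr js.
by move/eqP: rs; apply; apply: (inXk_uniq _ _ _ _ hS jr js).
Qed.

Lemma orthant (R : realType) (f : ktuple n k -> R) (X Y : ktuple n k) (q : 'I_k) (i : 'I_n) :
  k_submodular f -> in_Xk X -> in_Xk Y -> (forall r : 'I_k, X r \subset Y r) ->
  (forall r : 'I_k, i \notin Y r) ->
  marginal f Y q i <= marginal f X q i.
Proof.
move=> hf hX hY XY hi.
have sub : forall r j, j \in X r -> j \in Y r by move=> r j hj; move/fintype.subsetP: (XY r); apply.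
have hiX : forall r : 'I_k, i \notin X r.
  by move=> r; apply: contra (hi r); exact: sub.
have hX' := inXk_kadd X q i hX hiX.
have E1 : kmeet (kadd X q i) Y = X.
  apply/ffunP => r; apply/setP => j; rewrite !ffunE !inE.
  case: (r == q); rewrite ?inE.
    case: eqP => [->|_] /=; first by rewrite (negbTE (hiX r)) (negbTE (hi r)).
    by case hj: (j \in X r) => //=; rewrite sub.
  by case hj: (j \in X r) => //=; rewrite sub.
have E2 : kjoin (kadd X q i) Y = kadd Y q i.
  apply/ffunP => r; apply/setP => j; rewrite !ffunE !inE.
  have U : forall t, (j \in (kadd X q i) t) || (j \in Y t) = (j \in kadd Y q i t).
    move=> t; rewrite !ffunE; case: (t == q); rewrite ?inE.
      case: (j == i) => //=.
      by case hj: (j \in X t) => //=; rewrite sub.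
    by case hj: (j \in X t) => //=; rewrite sub.
  have := U r; rewrite !ffunE => ->.
  case hj: (j \in (if r == q then i |: Y r else Y r)); rewrite ?andbT ?andbF //.
  apply/negP => /bigcupP[t tr]; rewrite inE U => jt.
  move: hj jt; rewrite !ffunE.
  have hk : in_Xk (kadd Y q i) by apply: inXk_kadd.
  move=> h1 h2; move/eqP: tr; apply.
  have h1' : j \in kadd Y q i r by rewrite ffunE.
  have h2' : j \in kadd Y q i t by rewrite ffunE.
  exact: (inXk_uniq _ _ _ _ hk h2' h1').
have := hf _ _ hX' hY; rewrite E1 E2 /marginal => h.
lra.
Qed.

Lemma inXk_sub (S S' : ktuple n k) : in_Xk S -> (forall r : 'I_k, S' r \subset S r) ->
  in_Xk S'.
Proof.
move=> hS sub q r qr; apply/eqP/setP => j; rewrite !inE.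
apply/negP => /andP[h1 h2].
move/fintype.subsetP: (sub q) => /(_ _ h1) h1'.
move/fintype.subsetP: (sub r) => /(_ _ h2) h2'.
by move/eqP: qr; apply; apply: (inXk_uniq _ _ _ _ hS h1' h2').
Qed.

Lemma tele_base (R : realType) (f : ktuple n k -> R) (S S' : ktuple n k) :
  (forall r : 'I_k, S' r \subset S r) ->
  (forall (q : 'I_k) (j : 'I_n), j \notin S q :\: S' q) ->
  f S - f S' <= \sum_(q < k) \sum_(i < n)
      (i \in S q :\: S' q)%:R * marginal f (kempty n k) q i.
Proof.
move=> sub none.
have E : S' = S.
  apply/ffunP => q; apply/setP => j; apply/idP/idP.
    by move=> h; move/fintype.subsetP: (sub q); apply.
  by move=> h; apply: contraT => h'; move: (none q j); rewrite !inE h h'.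
rewrite E subrr big1 // => q _; rewrite big1 // => i _.
by rewrite finset.setDv inE mul0r.
Qed.

Lemma telescope (R : realType) (f : ktuple n k -> R) : k_submodular f ->
  forall m (S S' : ktuple n k), in_Xk S -> (forall r : 'I_k, S' r \subset S r) ->
  (\sum_(q < k) #|S q :\: S' q| <= m)%N ->
  f S - f S' <= \sum_(q < k) \sum_(i < n)
      (i \in S q :\: S' q)%:R * marginal f (kempty n k) q i.
Proof.
move=> hf; elim=> [|m IH] S S' hS sub hm;
  (case: (pickP (fun p : 'I_k * 'I_n => p.2 \in S p.1 :\: S' p.1)) =>
    [[q0 i0] /= hq0 | none]; last by apply: tele_base => // q j; apply/negbT/(none (q, j))).
- have : (0 < \sum_(q < k) #|S q :\: S' q|)%N.
    rewrite (bigD1 q0) //=; apply: leq_trans _ (leq_addr _ _).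
    by apply/card_gt0P; exists i0.
  by rewrite ltnNge hm.
have hS' := inXk_sub S S' hS sub.
move: (hq0); rewrite inE => /andP[ni0 i0S].
have hni : forall r : 'I_k, i0 \notin S' r.
  move=> r; apply/negP => h.
  have h' : i0 \in S r by move/fintype.subsetP: (sub r); apply.
  have rq := inXk_uniq _ _ _ _ hS h' i0S; subst r.
  by rewrite h in ni0.
pose S'' := kadd S' q0 i0.
have sub'' : forall r : 'I_k, S'' r \subset S r.
  move=> r; rewrite /S'' ffunE; case: eqP => [->|_]; last exact: sub.
  by rewrite finset.subUset finset.sub1set i0S sub.
have card : (\sum_(q < k) #|S q :\: S' q| = (\sum_(q < k) #|S q :\: S'' q|).+1)%N.
  rewrite (bigD1 q0) //= [X in _ = X.+1](bigD1 q0) //= -addSn; congr (_ + _)%N.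
    rewrite (cardsD1 i0) hq0 add1n; congr (_.+1); apply: eq_card => j.
    by rewrite /S'' !inE ffunE eqxx !inE; case: (j == i0).
  by apply: eq_bigr => q qq0; rewrite /S'' ffunE (negbTE qq0).
have IH' := IH S S'' hS sub''.
have := IH' _; rewrite -ltnS -card => /(_ hm) {}IH'.
have orth := orthant R f (kempty n k) S' q0 i0 hf inXk_empty hS'
  (fun r => ltac:(by rewrite ffunE finset.sub0set)) hni.
have ind : forall (q : 'I_k) (i : 'I_n), ((i \in S q :\: S' q)%:R : R) =
    (i \in S q :\: S'' q)%:R + ((q == q0) && (i == i0))%:R.
  move=> q i; rewrite /S'' ffunE.
  case: (eqVneq q q0) => [->|qq0] /=; last by rewrite addr0.
  rewrite !inE; case: (eqVneq i i0) => [->|ii0] /=.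
    by rewrite ni0 i0S add0r.
  by rewrite addr0.
under eq_bigr => q _ do under eq_bigr => i _ do rewrite ind mulrDl.
under eq_bigr => q _ do rewrite big_split /=.
rewrite big_split /=.
have -> : \sum_(q < k) \sum_(i < n) ((q == q0) && (i == i0))%:R *
    marginal f (kempty n k) q i = marginal f (kempty n k) q0 i0.
  rewrite (bigD1 q0) //= [X in _ + X]big1 ?addr0; last first.
    by move=> q qq0; rewrite big1 // => i _; rewrite (negbTE qq0) mul0r.
  rewrite (bigD1 i0) //= [X in _ + X]big1 ?addr0; last first.
    by move=> i ii0; rewrite (negbTE ii0) andbF mul0r.
  by rewrite !eqxx mul1r.
move: orth IH'; rewrite /marginal -/S''; lra.
Qed.
End K.
Section Cut.
Variables (R : realType) (n k : nat) (Om : finType).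
Variables (f : Om -> ktuple n k -> R) (xi : Om -> 'I_n -> bool)
  (D : 'I_k -> nat) (Pf : set (Om -> R)).

Lemma Qval_ge (g : ktuple n k -> R) (xw : 'I_n -> bool) x S :
  Qfeas D xw x S -> g S <= Qval g D xw x.
Proof.
move=> hS; apply: (le_sup_ub _ _ _ (\sum_S0 `|g S0|)); first by exists S.
by move=> y [S0 _ <-]; apply: le_trans (ler_norm _) (sum_norm_ge _ _ _ _).
Qed.

Lemma Qval_eq (g : ktuple n k -> R) (xw : 'I_n -> bool) x S :
  Qfeas D xw x S -> (forall S0, Qfeas D xw x S0 -> g S0 <= g S) ->
  Qval g D xw x = g S.
Proof.
by move=> hS hm; apply: sup_max; [exists S | move=> y [S0 h0 <-]; apply: hm].
Qed.

Lemma sumP_le_sup (a : Om -> R) p : (forall p, Pf p -> is_distr p) -> Pf p ->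
  \sum_w p w * a w <= sup [set \sum_w p w * a w | p in Pf].
Proof.
move=> hd hp; apply: (le_sup_ub _ _ _ (\sum_w `|a w|)); first by exists p.
move=> y [p0 h0 <-]; apply: le_trans (ler_norm _) _; exact: (distr_bound _ _ _ _ (hd _ h0)).
Qed.


Lemma PhiR_eq (xh : ktuple n k) (Shat : Om -> ktuple n k) (phat : Om -> R) :
  (forall w, Qfeas D (xi w) xh (Shat w) /\
     (forall S, Qfeas D (xi w) xh S -> f w S <= f w (Shat w))) ->
  Pf phat ->
  (forall p, Pf p -> \sum_(w : Om) phat w * f w (Shat w)
                      <= \sum_(w : Om) p w * f w (Shat w)) ->
  PhiR f xi D Pf xh = \sum_(w : Om) phat w * f w (Shat w).
Proof.
move=> hS hp hmin.
have E w : Qval (f w) D (xi w) xh = f w (Shat w).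
  by case: (hS w) => h1 h2; apply: Qval_eq.
rewrite /PhiR; apply: inf_min.
  by exists phat => //; apply: eq_bigr => w _; rewrite E.
move=> y [p hp' <-].
have -> : \sum_w p w * Qval (f w) D (xi w) xh = \sum_w p w * f w (Shat w).
  by apply: eq_bigr => w _; rewrite E.
exact: hmin.
Qed.

Lemma cut_zero (xh : ktuple n k) (Shat : Om -> ktuple n k) :
  (forall w, Qfeas D (xi w) xh (Shat w)) -> Pf !=set0 ->
  \sum_(q < k) \sum_(i < n) cutcoef f xi Pf Shat q i * (i \in xh q)%:R = 0.
Proof.
move=> hQ [p0 hp0]; apply: big1 => q _; apply: big1 => i _.
case hi: (i \in xh q); last by rewrite mulr0.
rewrite mulr1.
have Z : forall (p : Om -> R) w, p w * (marginal (f w) (kempty n k) q i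
           * (i \in Shat w q)%:R * (xi w i)%:R) = 0.
  move=> p w; case hx: (xi w i); last by rewrite mulr0 mulr0.
  case: (hQ w) => _ h2 _; move: (h2 q i); rewrite hi hx muln1 subnn leqn0 eqb0.
  by move/negbTE => ->; rewrite mulr0 mul0r mulr0.
rewrite /cutcoef; apply: sup_max.
  by exists p0 => //; apply: big1 => w _; apply: Z.
by move=> y [p _ <-]; rewrite big1 // => w _; rewrite Z.
Qed.


Lemma cut_valid (xh : ktuple n k) (Shat : Om -> ktuple n k) (phat : Om -> R) :
  (forall w, k_submodular (f w)) -> (forall p, Pf p -> is_distr p) -> Pf !=set0 ->
  (forall w, Qfeas D (xi w) xh (Shat w)) ->
  (forall p, Pf p -> \sum_(w : Om) phat w * f w (Shat w)
                      <= \sum_(w : Om) p w * f w (Shat w)) ->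
  forall x : ktuple n k,
  \sum_(w : Om) phat w * f w (Shat w)
    - \sum_(q < k) \sum_(i < n) cutcoef f xi Pf Shat q i * (i \in x q)%:R
  <= PhiR f xi D Pf x.
Proof.
move=> hsub hd [p0 hp0] hQ hmin x.
rewrite /PhiR; apply: lb_le_inf.
  by exists (\sum_w p0 w * Qval (f w) D (xi w) x); exists p0.
move=> y [p hp <-].
pose Sp := fun w => [ffun q => [set j in Shat w q | ~~ ((j \in x q) && xi w j)]] : ktuple n k.
have subS : forall w (r : 'I_k), Sp w r \subset Shat w r.
  by move=> w r; rewrite ffunE; apply/fintype.subsetP => j; rewrite inE => /andP[].
have feas : forall w, Qfeas D (xi w) x (Sp w).
  move=> w; case: (hQ w) => h1 h2 h3; split.
  - exact: (inXk_sub _ _ _ _ h1 (subS w)).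
  - move=> q i; rewrite ffunE inE.
    by case: (i \in Shat w q); case: (i \in x q); case: (xi w i).
  - move=> q; apply: leq_trans (h3 q); apply: leq_sum => i _; rewrite ffunE inE.
    by case: (i \in Shat w q); case: (i \in x q); case: (xi w i).
pose G w := \sum_(q < k) \sum_(i < n) marginal (f w) (kempty n k) q i
   * (i \in Shat w q)%:R * (xi w i)%:R * (i \in x q)%:R.
have tel : forall w, f w (Shat w) - G w <= Qval (f w) D (xi w) x.
  move=> w; case: (hQ w) => h1 _ _.
  have := telescope _ _ R (f w) (hsub w) _ (Shat w) (Sp w) h1 (subS w) (leqnn _).
  have := Qval_ge (f w) (xi w) x (Sp w) (feas w).
  have -> : \sum_(q < k) \sum_(i < n) (i \in Shat w q :\: Sp w q)%:R *
      marginal (f w) (kempty n k) q i = G w.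
    apply: eq_bigr => q _; apply: eq_bigr => i _; rewrite ffunE !inE.
    case: (i \in Shat w q); case: (i \in x q); case: (xi w i);
      by rewrite /= ?mulr1 ?mulr0 ?mul1r ?mul0r.
  lra.
have step1 : \sum_w p w * (f w (Shat w) - G w) <= \sum_w p w * Qval (f w) D (xi w) x.
  apply: ler_sum => w _; apply: ler_wpM2l; last exact: tel.
  by case: (hd p hp).
have step2 : \sum_w p w * G w = \sum_(q < k) \sum_(i < n)
    (\sum_w p w * (marginal (f w) (kempty n k) q i
           * (i \in Shat w q)%:R * (xi w i)%:R)) * (i \in x q)%:R.
  under eq_bigr => w _ do rewrite /G mulr_sumr; rewrite exchange_big /=.
  apply: eq_bigr => q _; under eq_bigr => w _ do rewrite mulr_sumr.
  rewrite exchange_big /=; apply: eq_bigr => i _; rewrite mulr_suml.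
  by apply: eq_bigr => w _; rewrite !mulrA.
have step3 : \sum_(q < k) \sum_(i < n)
    (\sum_w p w * (marginal (f w) (kempty n k) q i
           * (i \in Shat w q)%:R * (xi w i)%:R)) * (i \in x q)%:R
   <= \sum_(q < k) \sum_(i < n) cutcoef f xi Pf Shat q i * (i \in x q)%:R.
  apply: ler_sum => q _; apply: ler_sum => i _; apply: ler_wpM2r => //.
  exact: sumP_le_sup.
have step4 := hmin p hp.
have e : \sum_w p w * (f w (Shat w) - G w) = \sum_w p w * f w (Shat w) - \sum_w p w * G w.
  by rewrite -sumrB; apply: eq_bigr => w _; rewrite mulrBr.
move: step1 step3 step4; rewrite e step2; lra.
Qed.

End Cut.
Lemma step_facts (R : realType) (n k : nat) (Om : finType)
  (f : Om -> ktuple n k -> R) (xi : Om -> 'I_n -> bool)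
  (A D : 'I_k -> nat) (Pf : set (Om -> R)) (s s' : alg_state R n k) :
  (forall w, k_submodular (f w)) -> (forall p, Pf p -> is_distr p) -> Pf !=set0 ->
  alg_step f xi A D Pf s s' ->
  exists (v : R) (c : 'I_k -> 'I_n -> R) (eta : R),
    [/\ v = PhiR f xi D Pf (x_hat s),
        cuts s' = rcons (cuts s) (v, c),
        \sum_(q < k) \sum_(i < n) c q i * (i \in x_hat s q)%:R = 0,
        (forall x : ktuple n k, v - \sum_(q < k) \sum_(i < n) c q i * (i \in x q)%:R
                   <= PhiR f xi D Pf x)
      & master_opt A (cuts s') eta (x_hat s')] /\
    [/\ theta_lb s' = eta%:E,
        theta_ub s' = (if (v%:E < theta_ub s)%E then v%:E else theta_ub s) &
        x_star s' = (if (v%:E < theta_ub s)%E then x_hat s else x_star s)].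
Proof.
move=> hsub hd hPf [Shat [phat [hS hp hmin]]] /= [eta [xnew [hm ->]]].
exists (\sum_w phat w * f w (Shat w)), (cutcoef f xi Pf Shat), eta; split; split => //=.
- by rewrite (PhiR_eq _ _ _ _ _ _ _ _ _ _ _ hS hp hmin).
- apply: cut_zero => // w; exact: (hS w).1.
- apply: cut_valid => // w; exact: (hS w).1.
Qed.

Theorem theorem7 (R : realType) (n k : nat) (Om : finType)
  (f : Om -> ktuple n k -> R) (xi : Om -> 'I_n -> bool)
  (A D : 'I_k -> nat) (Pf : set (Om -> R)) (eps : R)
  (x1 : ktuple n k) (run : nat -> alg_state R n k) :
  (0 < n)%N -> (0 < k)%N ->
  (forall w, k_submodular (f w)) -> (forall w, k_monotone (f w)) ->
  Pf !=set0 -> @compact {ptws Om -> R} Pf -> (forall p, Pf p -> is_distr p) ->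
  0 <= eps ->
  in_calX A x1 ->
  run 0%N = alg_init R x1 ->
  (forall t, alg_continue eps (run t) -> alg_step f xi A D Pf (run t) (run t.+1)) ->
  exists T : nat,
    [/\ (forall t, (t < T)%N -> alg_continue eps (run t)),
        ~ alg_continue eps (run T),
        theta_ub (run T) = (PhiR f xi D Pf (x_star (run T)))%:E,
        in_calX A (x_star (run T))
      & forall x, in_calX A x ->
          PhiR f xi D Pf (x_star (run T)) <= PhiR f xi D Pf x + eps].
Proof.
move=> _ _ hsub _ hPf _ hd heps hx1 h0 hstep.
pose P t := alg_continue eps (run t).
have SF : forall t, P t -> _ := fun t Pt => step_facts _ _ _ _ f xi A D Pf _ _ hsub hd hPf (hstep t Pt).
have P0 : P 0%N.
  rewrite /P /alg_continue h0 /=; exact: ltry.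
have term : exists t, ~ P t.
  apply: contrapT => hall.
  have allP : forall t, P t by move=> t; apply: contrapT => nP; apply: hall; exists t.
  have mono : forall t, (forall c, c \in cuts (run t) -> c \in cuts (run t.+1)) /\
      (theta_ub (run t.+1) <= theta_ub (run t))%E.
    move=> t; have [v [c [eta [[_ hc _ _ _] [_ hub _]]]]] := SF t (allP t).
    split; first by move=> c0 hc0; rewrite hc mem_rcons inE hc0 orbT.
    rewrite hub; case: ifP => // /ltW //.
  have lift : forall j d, (forall c, c \in cuts (run j) -> c \in cuts (run (d + j)%N)) /\
      (theta_ub (run (d + j)%N) <= theta_ub (run j))%E.
    move=> j; elim=> [|d [IHc IHu]] //=.
    have [mc mu] := mono (d + j)%N.
    split; first by move=> c hc; apply: mc; apply: IHc.
    exact: le_trans mu IHu.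
  have inj : forall j d, x_hat (run (d + j.+1)%N) <> x_hat (run j).
    move=> j d E.
    have [v [c [eta [[_ hc hz _ _] [_ hub _]]]]] := SF j (allP j).
    have [hlc hlu] := lift j.+1 d.
    have hmem : (v, c) \in cuts (run (d + j.+1)%N).
      by apply: hlc; rewrite hc mem_rcons inE eqxx.
    have ubv : (theta_ub (run (d + j.+1)%N) <= v%:E)%E.
      apply: le_trans hlu _; rewrite hub; case: ifP => // /negbT.
      by rewrite -leNgt.
    have [v' [c' [eta' [[_ _ _ _ hm'] [hlb' _ _]]]]] := SF (d + j)%N (allP _).
    rewrite -addnS in hm' hlb'.
    case: hm' => _ hok _.
    have := hok _ hmem; rewrite /cut_ok /= E hz subr0 => veta.
    have := allP (d + j.+1)%N; rewrite /P /alg_continue hlb'.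
    move: ubv; case: (theta_ub _) => [r| |] //=.
    rewrite !lee_fin lte_fin => rv; lra.
  pose N := #|{: ktuple n k}|.
  have ginj : injective (fun i : 'I_N.+1 => x_hat (run i)).
    move=> i j /= E; apply/val_inj/eqP; apply: contraT => ij.
    case: (ltngtP i j) ij => // [ilt|jlt] _.
    - by move: E; rewrite -(subnK ilt) => /esym/inj.
    - by move: E; rewrite -(subnK jlt) => /inj.
  by have := leq_card _ ginj; rewrite card_ord ltnn.
have [T [nPT minT]] : exists T, ~ P T /\ forall t, (t < T)%N -> P t.
  have ex : exists t, ~~ `[< P t >] by case: term => t nt; exists t; apply/asboolPn.
  case: (ex_minnP ex) => T /asboolPn nPT minT; exists T; split => // t tT.
  apply: contrapT => nP; have := minT t (introN (asboolP _) nP).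
  by rewrite leqNgt tT.
pose Inv t := [/\ (forall c, c \in cuts (run t) -> forall x, in_calX A x ->
                     cut_ok (PhiR f xi D Pf x) x c),
    in_calX A (x_hat (run t)) &
    (theta_ub (run t) = +oo%E \/ (theta_ub (run t) = (PhiR f xi D Pf (x_star (run t)))%:E
        /\ in_calX A (x_star (run t))))].
have hInv : forall t, (t <= T)%N -> Inv t.
  elim=> [_|t IH tT].
    by rewrite /Inv h0 /=; split => //; left.
  have [Ic Ix Iu] := IH (ltnW tT).
  have [v [c [eta [[hv hc _ hvalid hm] [hlb hub hxs]]]]] := SF t (minT t tT).
  split.
  - move=> c0; rewrite hc mem_rcons inE => /orP[/eqP ->|h] x hx; last exact: Ic.
    by rewrite /cut_ok /=; apply: hvalid.
  - by case: hm.
  - rewrite hub hxs; case: ifP => _; last exact: Iu.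
    by right; split; [rewrite hv | exact: Ix].
case: T nPT minT hInv => [|T'] nPT minT hInv; first by [].
have [Ic _ Iu] := hInv T'.+1 (leqnn _).
have [v [c [eta [[_ _ _ _ hm] [hlb _ _]]]]] := SF T' (minT T' (ltnSn _)).
have etale : forall x, in_calX A x -> eta <= PhiR f xi D Pf x.
  case: hm => _ _ hmin x hx; apply: (hmin _ x hx) => c0 hc0; exact: Ic.
case: Iu => [hinf | [hub hxs]].
  by exfalso; apply: nPT; rewrite /P /alg_continue hinf hlb /=; exact: ltry.
exists T'.+1; split => //.
move=> x hx; move: nPT; rewrite /P /alg_continue hub hlb /= lte_fin.
move/negP; rewrite -leNgt => h; have := etale x hx; lra.
Qed.
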